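(* Let $d\ge1$ and $K\ge d+2$. Then for every $\mathbf W\in\mathrm{OB}(d,K)$ we have $\rho_{\text{one-vs-rest}}(\mathbf W)\le 1$, and equality holds only if $\mathbf 0\in\operatorname{conv}\{\mathbf w_1,\dots,\mathbf w_K\}$.
   Context: $\mathrm{OB}(d,K)$ is the set of real $d\times K$ matrices with unit-norm columns $\mathbf w_1,\dots,\mathbf w_K$. For a point $\mathbf v$ and finite set $\mathcal W$, $\operatorname{dist}(\mathbf v,\mathcal W)=\inf\{\|\mathbf v-\mathbf w\|_2:\mathbf w\in\operatorname{conv}(\mathcal W)\}$. $\rho_{\text{one-vs-rest}}(\mathbf W)=\min_{k}\operatorname{dist}(\mathbf w_k,\{\mathbf w_j\}_{j\ne k})$. *)

(* Defs.v *)
From mathcomp Require Import all_boot all_order all_algebra.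
From mathcomp Require Import boolp classical_sets reals.
Set Implicit Arguments. Unset Strict Implicit. Unset Printing Implicit Defensive.
Import Order.TTheory GRing.Theory Num.Theory.
Local Open Scope ring_scope.
Local Open Scope classical_set_scope.

Definition enorm (R : realType) (d : nat) (v : 'cV[R]_d) : R :=
  Num.sqrt (\sum_(i < d) v i 0 ^+ 2).

Definition OB (R : realType) (d K : nat) (W : 'M[R]_(d, K)) : Prop :=
  forall k : 'I_K, enorm (col k W) = 1.

Definition conv_cols (R : realType) (d K : nat) (W : 'M[R]_(d, K))
    (P : pred 'I_K) : set 'cV[R]_d :=
  [set x | exists lam : 'I_K -> R,
     (forall j, 0 <= lam j) /\ (forall j, ~~ P j -> lam j = 0) /\
     \sum_(j < K) lam j = 1 /\ x = \sum_(j < K) lam j *: col j W].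

Definition dist_conv (R : realType) (d K : nat) (v : 'cV[R]_d)
    (W : 'M[R]_(d, K)) (P : pred 'I_K) : R :=
  inf [set enorm (v - w) | w in conv_cols W P].

Definition rho_ovr (R : realType) (d K : nat) (W : 'M[R]_(d, K)) : R :=
  inf [set dist_conv (col k W) W (fun j => j != k) | k in [set: 'I_K]].

(* Main.v *)
Require Import Defs.
From mathcomp Require Import all_boot all_order all_algebra.
From mathcomp Require Import boolp classical_sets reals.
From mathcomp Require Import zify ring lra.
Import Order.TTheory GRing.Theory Num.Theory.
Local Open Scope ring_scope.
Local Open Scope classical_set_scope.
Set Implicit Arguments. Unset Strict Implicit.

Lemma inf_ge0 (R : realType) (S : set R) : (forall x, S x -> 0 <= x) -> 0 <= inf S.
Proof.
move=> H; have [[x Sx]|hn] := pselect (exists x, S x); last first.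
  have -> : S = set0 by apply/seteqP; split => y // Sy; apply: hn; exists y.
  by rewrite inf0.
apply: lb_le_inf; first by exists x.
by move=> y /H.
Qed.

Lemma inf_le_elt (R : realType) (S : set R) x : (forall y, S y -> 0 <= y) -> S x -> inf S <= x.
Proof. by move=> H Sx; apply: ge_inf => //; exists 0 => y /H. Qed.

Lemma affdep (R: realType) d K (W : 'M[R]_(d,K)) : (d + 2 <= K)%N ->
  exists a : 'I_K -> R, (exists j, a j != 0) /\ \sum_j a j = 0 /\
     \sum_j a j *: col j W = 0.
Proof.
move=> hK.
pose A : 'M[R]_(K, d + 1) := row_mx W^T (const_mx 1).
have nz : kermx A != 0.
  rewrite kermx_eq0 /row_free; apply/negP => /eqP hr.
  have := rank_leq_col A; rewrite hr; lia.
have [i Hi] : exists i, row i (kermx A) != 0.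
  apply: contrapT => /forallNP H; move/negP: nz; apply; apply/eqP/matrixP => i j.
  have := H i; move/negP/negPn/eqP/rowP => /(_ j); rewrite !mxE => ->.
  by rewrite ?mxE.
set u := row i (kermx A).
have uA : u *m A = 0 by rewrite /u -row_mul mulmx_ker row0.
move: uA; rewrite /A mul_mx_row -row_mx0 => /eq_row_mx [h1 h2].
exists (fun j => u 0 j); split; [|split].
- apply: contrapT => /forallNP H; move/negP: Hi; apply; apply/eqP/rowP => j.
  by have := H j; move/negP/negPn/eqP => ->; rewrite mxE.
- transitivity ((u *m (const_mx 1 : 'M[R]_(K,1))) 0 0); last by rewrite h2 mxE.
  by rewrite mxE; apply: eq_bigr => j _; rewrite !mxE mulr1.
- apply/matrixP => k l; rewrite summxE mxE.
  transitivity ((u *m W^T) 0 k); last by rewrite h1 mxE.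
  by rewrite (ord1 l) mxE; apply: eq_bigr => j _; rewrite !mxE.
Qed.

Lemma wvar (R : realType) (I : finType) (l f : I -> R) c :
  \sum_i l i * (f i - c) ^+ 2 =
  \sum_i l i * f i ^+ 2 - 2 * c * \sum_i l i * f i + c ^+ 2 * \sum_i l i.
Proof.
rewrite !mulr_sumr -sumrB -big_split /=; apply: eq_bigr => i _; ring.
Qed.

Lemma exists_le (R : realType) (I : finType) (l f : I -> R) c :
  (forall i, 0 <= l i) -> \sum_i l i = 1 -> \sum_i l i * f i = c ->
  exists i, 0 < l i /\ f i <= c.
Proof.
move=> l0 l1 lf; apply: contrapT => /forallNP H.
have Hc : forall i, 0 <= l i * (f i - c).
  move=> i; have := H i; have := l0 i; rewrite le0r => /orP [/eqP ->|lp].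
    by rewrite mul0r.
  by move=> /not_andP [] // /negP; rewrite -ltNge => fc; rewrite mulr_ge0 // ?subr_ge0 ltW.
have e : \sum_i l i * (f i - c) = 0.
  rewrite (eq_bigr (fun i => l i * f i - c * l i)); last by move=> i _; ring.
  by rewrite sumrB -mulr_sumr l1 lf mulr1 subrr.
have := (psumr_eq0P (fun i _ => Hc i) e).
have [i0 Hi0] : exists i, 0 < l i.
  apply: contrapT => /forallNP H2.
  have : \sum_i l i = 0 by apply: big1 => i _; apply/eqP; rewrite eq_le l0 andbT leNgt; apply/negP/H2.
  by rewrite l1 => /eqP; rewrite oner_eq0.
move=> /(_ i0 isT) /eqP; rewrite mulf_eq0 gt_eqF //= subr_eq0 => /eqP fe.
by apply: (H i0); split => //; rewrite fe.
Qed.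

Definition sq (R : realType) d (v : 'cV[R]_d) := \sum_(i < d) v i 0 ^+ 2.

Lemma sq_ge0 (R : realType) d (v : 'cV[R]_d) : 0 <= sq v.
Proof. by apply: sumr_ge0 => i _; rewrite sqr_ge0. Qed.

Lemma enormE (R : realType) d (v : 'cV[R]_d) : enorm v = Num.sqrt (sq v).
Proof. by []. Qed.

Lemma dist_le (R : realType) d K (v w : 'cV[R]_d) (W : 'M[R]_(d, K)) P :
  conv_cols W P w -> dist_conv v W P <= enorm (v - w).
Proof.
move=> hw; apply: inf_le_elt; last by exists w.
by move=> y [z _ <-]; rewrite sqrtr_ge0.
Qed.

Lemma rho_le (R : realType) d K (W : 'M[R]_(d, K)) j :
  rho_ovr W <= dist_conv (col j W) W (fun i => i != j).
Proof.
apply: inf_le_elt; last by exists j.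
move=> y [k _ <-]; apply: inf_ge0 => z [w _ <-]; exact: sqrtr_ge0.
Qed.

Unset Implicit Arguments.

Theorem mainTheorem5 (R : realType) (d K : nat) (W : 'M[R]_(d, K)) :
  (1 <= d)%N -> (d + 2 <= K)%N -> OB W ->
  rho_ovr W <= 1 /\ (rho_ovr W = 1 -> conv_cols W predT 0).
Proof.
move=> hd hK hOB.
have hW : forall k, \sum_i W i k ^+ 2 = 1.
  move=> k; have := hOB k; rewrite /enorm => e.
  have h0 : 0 <= \sum_i col k W i 0 ^+ 2 by apply: sumr_ge0 => i _; rewrite sqr_ge0.
  have -> : \sum_i W i k ^+ 2 = \sum_i col k W i 0 ^+ 2.
    by apply: eq_bigr => i _; rewrite mxE.
  by rewrite -(sqr_sqrtr h0) e expr1n.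
have [a [[j0 hj0] [sa va]]] := affdep W hK.
have [j1 hj1] : exists j, 0 < a j.
  apply: contrapT => /forallNP H.
  have an : forall j, 0 <= - a j by move=> j; rewrite oppr_ge0 leNgt; apply/negP/H.
  have : \sum_j - a j = 0 by rewrite sumrN sa oppr0.
  move=> /(psumr_eq0P (fun j _ => an j)) /(_ j0 isT) /eqP.
  by rewrite oppr_eq0 (negbTE hj0).
pose pp j := Num.max (a j) 0.
pose nn j := Num.max (- a j) 0.
have pp0 j : 0 <= pp j by rewrite le_max lexx orbT.
have nn0 j : 0 <= nn j by rewrite le_max lexx orbT.
have ppnn j : pp j - nn j = a j.
  rewrite /pp /nn; case: (leP 0 (a j)) => h.
    by rewrite max_r ?subr0 // oppr_le0.
  by rewrite max_l ?sub0r ?opprK // oppr_ge0 ltW.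
pose s := \sum_j pp j.
have s0 : 0 < s.
  rewrite /s (bigD1 j1) //=; apply: lt_le_trans (_ : pp j1 <= _).
    by rewrite lt_max hj1.
  by rewrite lerDl sumr_ge0.
have sn : \sum_j nn j = s.
  have : \sum_j (pp j - nn j) = 0 by rewrite (eq_bigr _ (fun j _ => ppnn j)).
  by rewrite sumrB => /eqP; rewrite subr_eq0 => /eqP <-.
pose lam j := pp j / s.
pose mu j := nn j / s.
have lam0 j : 0 <= lam j by rewrite divr_ge0 // ltW.
have mu0 j : 0 <= mu j by rewrite divr_ge0 // ltW.
have lam1 : \sum_j lam j = 1 by rewrite -mulr_suml divff // gt_eqF.
have mu1 : \sum_j mu j = 1 by rewrite -mulr_suml sn divff // gt_eqF.
pose p := \sum_j lam j *: col j W.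
have pmu : p = \sum_j mu j *: col j W.
  apply/eqP; rewrite -subr_eq0 /p -sumrB.
  rewrite (eq_bigr (fun j => s^-1 *: (a j *: col j W))).
    by rewrite -scaler_sumr va scaler0.
  by move=> j _; rewrite -scalerBl -ppnn scalerA /lam /mu -mulrBl mulrC.
have pE i : p i 0 = \sum_j lam j * W i j.
  by rewrite /p summxE; apply: eq_bigr => j _; rewrite !mxE.
have key : \sum_j lam j * sq (col j W - p) = 1 - sq p.
  rewrite /sq.
  rewrite (eq_bigr (fun j => \sum_i lam j * (W i j - p i 0) ^+ 2)); last first.
    by move=> j _; rewrite mulr_sumr; apply: eq_bigr => i _; rewrite !mxE.
  rewrite exchange_big /=.
  rewrite (eq_bigr (fun i => \sum_j lam j * W i j ^+ 2 - p i 0 ^+ 2)); last first.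
    move=> i _; rewrite wvar lam1 -pE; ring.
  rewrite sumrB exchange_big /=.
  congr (_ - _).
  rewrite (eq_bigr (fun j => lam j)) //.
  by move=> j _; rewrite -mulr_sumr hW mulr1.
have [j [hlj hj]] := exists_le lam0 lam1 key.
have aj : 0 < a j.
  move: hlj; rewrite /lam pmulr_lgt0 ?invr_gt0 // lt_max ltxx orbF //.
have muj : mu j = 0 by rewrite /mu /nn max_r ?mul0r // oppr_le0 ltW.
have pin : conv_cols W (fun i => i != j) p.
  exists mu; split => //; split; last by split.
  by move=> i; rewrite negbK => /eqP ->.
have hd1 := dist_le (col j W) pin.
have hr := rho_le W j.
have sq0 := sq_ge0 (col j W - p).
have sqp := sq_ge0 p.
have hs := sqr_sqrtr sq0.
have hs0 : 0 <= Num.sqrt (sq (col j W - p)) by rewrite sqrtr_ge0.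
rewrite enormE in hd1.
split.
  apply: le_trans hr _; apply: le_trans hd1 _; nra.
move=> r1.
have hp0 : sq p = 0.
  apply/eqP; rewrite eq_le sqp andbT.
  have : 1 <= Num.sqrt (sq (col j W - p)) by rewrite -r1; apply: le_trans hd1.
  move=> h1; nra.
exists lam; split => //; split => //; split => //.
apply/matrixP => i k; rewrite (ord1 k) mxE -/p.
move: hp0; rewrite /sq => /(psumr_eq0P (fun i _ => sqr_ge0 (p i 0))) /(_ i isT).
by move/eqP; rewrite sqrf_eq0 => /eqP ->.
Qed.
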